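(* Consider a GND instance, a reply $\varrho$-oracle ($\varrho\ge1$), and a cost sharing mechanism $M$ whose induced GND game admits an $(A,B)$-bounded potential function and is $(\lambda,\mu)$-smooth with $\mu<1/(\varrho\epsilon_1^2)$, where $\epsilon_1=\frac{1+\epsilon}{1-\epsilon}$. Let $Q=\frac{2\epsilon_1NA}{1-\varrho\epsilon_1^2\mu}$, $T=\lceil Q\ln(ABN^{\max_j\alpha_j})\rceil$ and $T'=N\cdot T^2$. Run the randomized-selection variant of Alg-ABRD for $T'$ steps. Then with probability at least $1/2$ its output $p^{t^*}$ satisfies $$C(p^{t^*})\le\frac{2\varrho\epsilon_1^2\lambda}{1-\varrho\epsilon_1^2\mu}\cdot C^*.$$
   Context: GND instance: finite resource set $E$; requests $i \in [N]$, each with a reply collection $P_i \subseteq 2^E$ and a weight vector $w_i \in \mathbb{Z}_{\geq 1}^E$; constants $q \in \mathbb{Z}_{\ge 1}$, $\alpha_1,\dots,\alpha_q > 1$; for each $e$, $\sigma_e \geq 0$ and $\xi_{e,j} \geq 0$ (at least one $\xi_{e,j}>0$), and cost function $F_e(0)=0$, $F_e(l)=\sigma_e+\sum_j \xi_{e,j} l^{\alpha_j}$ for $l>0$. A strategy profile is $p=(p_1,\dots,p_N)\in P = P_1\times\dots\times P_N$; load $l_e^p=\sum_{i: e\in p_i} w_i(e)$; total cost $C(p)=\sum_e F_e(l_e^p)$; $C^*=\min_{p\in P} C(p)$. $(p'_i,p_{-i})$ is $p$ with the $i$-th coordinate replaced by $p'_i$. A reply $\varrho$-oracle, given a reply collection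 $R$ and tolls $\tau:E\to\mathbb{R}_{>0}$, returns $r \in R$ with $\sum_{e\in r}\tau(e) \le \varrho \sum_{e \in r'}\tau(e)$ for all $r'\in R$. A cost sharing mechanism (CSM) $M=\{f_{i,e}\}$ assigns cost shares $f_{i,e}(p) \geq 0$ with $\sum_i f_{i,e}(p) = F_e(l_e^p)$; it is separable and uniform: $f_{i,e}(p)=0$ if $e \notin p_i$, and $f_{i,e}(p)$ depends only on $w_i(e)$ and the multiset of weights of the other players using $e$. Individual cost $C_i(p)=\sum_e f_{i,e}(p)$. The game is $(\lambda,\mu)$-smooth ($\lambda>0$, $0<\mu<1$) if $\sum_i C_i(p'_i,p_{-i}) \le \lambda C(p') + \mu C(p)$ for all $p,p'$. $\Phi:P\to\mathbb{R}_{>0}$ is a potential function if $\Phi(p')-\Phi(p)=C_i(p')-C_i(p)$ whenever $p,p'$ differ only in coordinate $i$; it is $(A,B)$-bounded ($A,B\ge1$) if $\Phi(p)/A \le C(p) \le B\,\Phi(p)$ for all $p$. Randomized-selection variant of Alg-ABRD: fix small $\epsilon>0$. Values $\widetilde f_{i,e}(p)$ are fixed for all $i,e,p$ with $(1-\epsilon) f_{i,e}(p) \le \widetilde f_{i,e}(p) \le (1+\epsilon) f_{i,e}(p)$, and $\widetilde C_i(p)=\sum_e \widetilde f_{i,e}(p)$. Initial profile $p^0$: for each $i$, $p^0_i$ is the oracle's output on $P_i$ with tolls $\tau_i^0(e)=F_e(w_i(e))$. For $t=1,2,\dots$ up to the step budget: for every $i$ compute $p'_i$ with $\widetilde C_i(p'_i,p^{t-1}_{-i})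 \le \varrho\, \widetilde C_i(p''_i,p^{t-1}_{-i})$ for all $p''_i\in P_i$, and let $\delta_i^t=\widetilde C_i(p^{t-1}) - \epsilon_1 \widetilde C_i(p'_i,p^{t-1}_{-i})$. If $\delta_i^t \le 0$ for all $i$, set $p^t=p^{t-1}$ and stop. Otherwise draw $i\in[N]$ uniformly at random; if $\delta_i^t>0$ set $p^t=(p'_i,p^{t-1}_{-i})$, else $p^t=p^{t-1}$. Output a generated profile $p^{t^*}$ of minimum total cost. Probability is over the random player selections. *)

(* Defs.v *)
From HB Require Import structures.
From mathcomp Require Import all_boot all_order all_algebra.
From mathcomp Require Import all_classical all_reals all_analysis.
Set Implicit Arguments. Unset Strict Implicit. Unset Printing Implicit Defensive.
Import Order.TTheory GRing.Theory Num.Theory.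
Local Open Scope ring_scope.

(* Strategy profiles: p i is the reply (subset of resources) of request i. *)
Definition profile (E : finType) (N : nat) := {ffun 'I_N -> {set E}}.

Definition upd (E : finType) (N : nat) (p : profile E N) (i : 'I_N) (s : {set E})
  : profile E N := [ffun j => if j == i then s else p j].

Definition valid (E : finType) (N : nat) (P : 'I_N -> {set {set E}}) (p : profile E N)
  : bool := [forall i, p i \in P i].

Definition gnd_instance (R : realType) (E : finType) (N : nat)
  (P : 'I_N -> {set {set E}}) (w : 'I_N -> E -> nat) (q : nat)
  (alpha : 'I_q -> R) (sigma : E -> R) (xi : E -> 'I_q -> R) : Prop :=
  [/\ (0 < N)%N, forall i, (0 < #|P i|)%N, forall i e, (0 < w i e)%N, (0 < q)%N &
      [/\ forall j, 1 < alpha j, forall e, 0 <= sigma e,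
          forall e j, 0 <= xi e j & forall e, exists j, 0 < xi e j]].

Definition Fcost (R : realType) (E : finType) (q : nat) (alpha : 'I_q -> R)
  (sigma : E -> R) (xi : E -> 'I_q -> R) (e : E) (l : nat) : R :=
  if l == 0%N then 0 else sigma e + \sum_(j < q) xi e j * (l%:R `^ alpha j).

Definition load (E : finType) (N : nat) (w : 'I_N -> E -> nat) (p : profile E N) (e : E)
  : nat := (\sum_(i < N | e \in p i) w i e)%N.

Definition total_cost (R : realType) (E : finType) (N : nat) (w : 'I_N -> E -> nat)
  (q : nat) (alpha : 'I_q -> R) (sigma : E -> R) (xi : E -> 'I_q -> R)
  (p : profile E N) : R :=
  \sum_(e : E) Fcost alpha sigma xi e (load w p e).

Definition is_oracle (R : realType) (E : finType) (rho : R)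
  (O : {set {set E}} -> (E -> R) -> {set E}) : Prop :=
  forall (Rc : {set {set E}}) (tau : E -> R), (0 < #|Rc|)%N -> (forall e, 0 < tau e) ->
    O Rc tau \in Rc /\
    forall r', r' \in Rc -> \sum_(e in O Rc tau) tau e <= rho * \sum_(e in r') tau e.

Definition is_csm (R : realType) (E : finType) (N : nat) (P : 'I_N -> {set {set E}})
  (w : 'I_N -> E -> nat) (q : nat) (alpha : 'I_q -> R) (sigma : E -> R)
  (xi : E -> 'I_q -> R) (f : 'I_N -> E -> profile E N -> R) : Prop :=
  [/\ forall i e p, valid P p -> 0 <= f i e p,
      forall e p, valid P p -> \sum_(i < N) f i e p = Fcost alpha sigma xi e (load w p e),
      forall i e p, valid P p -> e \notin p i -> f i e p = 0 &
      forall i j e p p', valid P p -> valid P p' -> e \in p i -> e \in p' j ->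
        w i e = w j e ->
        perm_eq [seq w k e | k <- enum 'I_N & (k != i) && (e \in p k)]
                [seq w k e | k <- enum 'I_N & (k != j) && (e \in p' k)] ->
        f i e p = f j e p'].

Definition indiv_cost (R : realType) (E : finType) (N : nat)
  (f : 'I_N -> E -> profile E N -> R) (i : 'I_N) (p : profile E N) : R :=
  \sum_(e : E) f i e p.

Definition is_smooth (R : realType) (E : finType) (N : nat) (P : 'I_N -> {set {set E}})
  (w : 'I_N -> E -> nat) (q : nat) (alpha : 'I_q -> R) (sigma : E -> R)
  (xi : E -> 'I_q -> R) (f : 'I_N -> E -> profile E N -> R) (lam mu : R) : Prop :=
  [/\ 0 < lam, 0 < mu, mu < 1 &
    forall p p', valid P p -> valid P p' ->
      \sum_(i < N) indiv_cost f i (upd p i (p' i))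
        <= lam * total_cost w alpha sigma xi p' + mu * total_cost w alpha sigma xi p].

Definition is_potential (R : realType) (E : finType) (N : nat) (P : 'I_N -> {set {set E}})
  (f : 'I_N -> E -> profile E N -> R) (Phi : profile E N -> R) : Prop :=
  (forall p, valid P p -> 0 < Phi p) /\
  (forall p i s, valid P p -> s \in P i ->
     Phi (upd p i s) - Phi p = indiv_cost f i (upd p i s) - indiv_cost f i p).

Definition potential_bounded (R : realType) (E : finType) (N : nat)
  (P : 'I_N -> {set {set E}}) (w : 'I_N -> E -> nat) (q : nat) (alpha : 'I_q -> R)
  (sigma : E -> R) (xi : E -> 'I_q -> R) (Phi : profile E N -> R) (A B : R) : Prop :=
  [/\ 1 <= A, 1 <= B &
    forall p, valid P p ->
      Phi p / A <= total_cost w alpha sigma xi p <= B * Phi p].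

Definition eps1 (R : realType) (eps : R) : R := (1 + eps) / (1 - eps).

Definition approx_shares (R : realType) (E : finType) (N : nat) (P : 'I_N -> {set {set E}})
  (f ft : 'I_N -> E -> profile E N -> R) (eps : R) : Prop :=
  forall i e p, valid P p -> (1 - eps) * f i e p <= ft i e p <= (1 + eps) * f i e p.

(* Best responses p'_i computed at step t: br t i p is the p'_i computed at
   step t for request i when the current profile is p. *)
Definition approx_br (R : realType) (E : finType) (N : nat) (P : 'I_N -> {set {set E}})
  (ft : 'I_N -> E -> profile E N -> R) (rho : R)
  (br : nat -> 'I_N -> profile E N -> {set E}) : Prop :=
  forall t i p, valid P p ->
    br t i p \in P i /\
    forall s, s \in P i ->
      indiv_cost ft i (upd p i (br t i p)) <= rho * indiv_cost ft i (upd p i s).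

Definition init_profile (R : realType) (E : finType) (N : nat) (P : 'I_N -> {set {set E}})
  (w : 'I_N -> E -> nat) (q : nat) (alpha : 'I_q -> R) (sigma : E -> R)
  (xi : E -> 'I_q -> R) (O : {set {set E}} -> (E -> R) -> {set E}) : profile E N :=
  [ffun i => O (P i) (fun e => Fcost alpha sigma xi e (w i e))].

Definition delta (R : realType) (E : finType) (N : nat)
  (ft : 'I_N -> E -> profile E N -> R) (br : nat -> 'I_N -> profile E N -> {set E})
  (eps : R) (t : nat) (i : 'I_N) (p : profile E N) : R :=
  indiv_cost ft i p - eps1 eps * indiv_cost ft i (upd p i (br t i p)).

(* One step t of the randomized-selection Alg-ABRD with selected player i;
   the state is (current profile, has the algorithm stopped). *)
Definition abrd_step (R : realType) (E : finType) (N : nat)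
  (ft : 'I_N -> E -> profile E N -> R) (br : nat -> 'I_N -> profile E N -> {set E})
  (eps : R) (t : nat) (i : 'I_N) (st : profile E N * bool) : profile E N * bool :=
  let: (p, stopped) := st in
  if stopped then (p, true)
  else if [forall j, delta ft br eps t j p <= 0] then (p, true)
  else if 0 < delta ft br eps t i p then (upd p i (br t i p), false)
  else (p, false).

Fixpoint abrd_run (R : realType) (E : finType) (N : nat)
  (ft : 'I_N -> E -> profile E N -> R) (br : nat -> 'I_N -> profile E N -> {set E})
  (eps : R) (t : nat) (st : profile E N * bool) (cs : seq 'I_N) : seq (profile E N) :=
  match cs with
  | [::] => [::]
  | i :: cs' => let st' := abrd_step ft br eps t i st in
                st'.1 :: abrd_run ft br eps t.+1 st' cs'
  end.

Definition generated (R : realType) (E : finType) (N : nat)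
  (ft : 'I_N -> E -> profile E N -> R) (br : nat -> 'I_N -> profile E N -> {set E})
  (eps : R) (p0 : profile E N) (cs : seq 'I_N) : seq (profile E N) :=
  p0 :: abrd_run ft br eps 1 (p0, false) cs.

(* C(p^{t^*}): the minimum total cost of a generated profile. *)
Definition output_cost (R : realType) (E : finType) (N : nat) (w : 'I_N -> E -> nat)
  (q : nat) (alpha : 'I_q -> R) (sigma : E -> R) (xi : E -> 'I_q -> R)
  (ft : 'I_N -> E -> profile E N -> R) (br : nat -> 'I_N -> profile E N -> {set E})
  (eps : R) (p0 : profile E N) (cs : seq 'I_N) : R :=
  \big[Num.min/total_cost w alpha sigma xi p0]_(p <- generated ft br eps p0 cs)
     total_cost w alpha sigma xi p.

(* max_j alpha_j (q >= 1 and alpha_j > 1, so starting the max at 0 is harmless) *)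
Definition alpha_max (R : realType) (q : nat) (alpha : 'I_q -> R) : R :=
  \big[Num.max/0]_(j < q) alpha j.

Definition Qpar (R : realType) (N : nat) (rho A mu eps : R) : R :=
  2 * eps1 eps * N%:R * A / (1 - rho * eps1 eps ^+ 2 * mu).

Definition Tpar (R : realType) (N q : nat) (alpha : 'I_q -> R) (rho A B mu eps : R) : nat :=
  `|Num.ceil (Qpar N rho A mu eps * ln (A * B * (N%:R `^ alpha_max alpha)))|%N.

Definition Tprime (R : realType) (N q : nat) (alpha : 'I_q -> R) (rho A B mu eps : R) : nat :=
  (N * (Tpar N alpha rho A B mu eps) ^ 2)%N.

(* Probability (uniform independent selections in [N] at each of the Tp steps)
   that the output cost is at most K * C^*. *)
Definition success_prob (R : realType) (E : finType) (N : nat) (P : 'I_N -> {set {set E}})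
  (w : 'I_N -> E -> nat) (q : nat) (alpha : 'I_q -> R) (sigma : E -> R)
  (xi : E -> 'I_q -> R) (ft : 'I_N -> E -> profile E N -> R)
  (br : nat -> 'I_N -> profile E N -> {set E}) (eps : R) (p0 : profile E N)
  (Tp : nat) (K : R) : R :=
  #|[set c : {ffun 'I_Tp -> 'I_N} |
      [forall popt : profile E N, valid P popt ==>
         (output_cost w alpha sigma xi ft br eps p0 [seq c k | k <- enum 'I_Tp]
            <= K * total_cost w alpha sigma xi popt)]]|%:R
  / (N ^ Tp)%:R.

(* Main.v *)
Require Import Defs.
From HB Require Import structures.
From mathcomp Require Import all_boot all_order all_algebra.
From mathcomp Require Import all_classical all_reals all_analysis.
From mathcomp Require Import ring lra zify.
Import Order.TTheory GRing.Theory Num.Theory.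
Local Open Scope ring_scope.

Section Main.
Variables (R : realType) (E : finType) (N : nat)
  (P : 'I_N -> {set {set E}}) (w : 'I_N -> E -> nat) (q : nat)
  (alpha : 'I_q -> R) (sigma : E -> R) (xi : E -> 'I_q -> R)
  (rho : R) (O : {set {set E}} -> (E -> R) -> {set E})
  (f : 'I_N -> E -> profile E N -> R) (Phi : profile E N -> R)
  (A B lam mu eps : R)
  (ft : 'I_N -> E -> profile E N -> R)
  (br : nat -> 'I_N -> profile E N -> {set E}).
Hypotheses (Hg : gnd_instance P w alpha sigma xi)
  (Hrho : 1 <= rho) (Hor : is_oracle rho O)
  (Hcsm : is_csm P w alpha sigma xi f)
  (Hpot : is_potential P f Phi) (Hbnd : potential_bounded P w alpha sigma xi Phi A B)
  (Hsm : is_smooth P w alpha sigma xi f lam mu)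
  (Heps : 0 < eps < 1)
  (Hmu : mu < 1 / (rho * eps1 eps ^+ 2))
  (Hapx : approx_shares P f ft eps)
  (Hbr : approx_br P ft rho br).

Implicit Types (p : profile E N) (i : 'I_N) (s : {set E}).
Local Notation C := (total_cost w alpha sigma xi).
Local Notation F := (Fcost alpha sigma xi).
Local Notation e1 := (eps1 eps).
Local Notation r := (rho * eps1 eps ^+ 2).
Local Notation Ci := (indiv_cost f).
Local Notation Cti := (indiv_cost ft).

Lemma eps_gt0 : 0 < eps. Proof. by case/andP: Heps. Qed.
Lemma eps_lt1 : eps < 1. Proof. by case/andP: Heps. Qed.

Lemma e1_eq : e1 * (1 - eps) = 1 + eps.
Proof. have := eps_lt1 => h. rewrite /eps1 mulrAC -mulrA mulfV ?mulr1 //. lra. Qed.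

Lemma e1_ge1 : 1 <= e1.
Proof.
have h1 := eps_lt1; have h0 := eps_gt0.
rewrite /eps1 ler_pdivlMr; lra.
Qed.

Lemma r_ge1 : 1 <= r.
Proof.
have h := e1_ge1. have h2 : 1 <= e1 ^+ 2 by rewrite expr_ge1 // (le_trans ler01).
by rewrite -[1]mulr1 ler_pM // ler01.
Qed.

Lemma rmu_lt1 : r * mu < 1.
Proof.
have h := r_ge1. have hr : 0 < r by lra.
by rewrite mulrC -ltr_pdivlMr // div1r -[r^-1]div1r.
Qed.

Lemma valid_upd p i s : valid P p -> s \in P i -> valid P (upd p i s).
Proof.
move=> /forallP vp si; apply/forallP=> j; rewrite ffunE.
by case: eqP => [->|].
Qed.
Arguments valid_upd {p i s}.

Lemma upd_id p i : upd p i (p i) = p.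
Proof. by apply/ffunP=> j; rewrite ffunE; case: eqP => [->|]. Qed.

Lemma F_ge0 e l : 0 <= F e l.
Proof.
case: Hg => _ _ _ _ [_ hs hx _].
rewrite /Fcost; case: eqP => // _.
apply: addr_ge0 => //; apply: sumr_ge0 => j _; apply: mulr_ge0 => //.
Qed.

Lemma cost_sum p : valid P p -> C p = \sum_i Ci i p.
Proof.
move=> vp; case: Hcsm => _ hs _ _.
rewrite /total_cost /indiv_cost exchange_big /=; apply: eq_bigr => e _.
by rewrite hs.
Qed.

Lemma Ci_ge0 i p : valid P p -> 0 <= Ci i p.
Proof. by move=> vp; case: Hcsm => h _ _ _; apply: sumr_ge0 => e _; apply: h. Qed.

Lemma ft_lo i p : valid P p -> (1 - eps) * Ci i p <= Cti i p.
Proof.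
move=> vp; rewrite /indiv_cost mulr_sumr; apply: ler_sum => e _.
by case/andP: (Hapx i e p vp).
Qed.

Lemma ft_hi i p : valid P p -> Cti i p <= (1 + eps) * Ci i p.
Proof.
move=> vp; rewrite /indiv_cost mulr_sumr; apply: ler_sum => e _.
by case/andP: (Hapx i e p vp).
Qed.
Arguments ft_lo i {p}.
Arguments ft_hi i {p}.


Lemma e1_gt0 : 0 < e1.
Proof. by have := e1_ge1; lra. Qed.

Lemma C_ge0 p : 0 <= C p.
Proof. by apply: sumr_ge0 => e _; apply: F_ge0. Qed.

Lemma step_dec t i p : valid P p -> 0 < delta ft br eps t i p ->
  (1 + eps) * (Phi (upd p i (br t i p)) - Phi p) <= - delta ft br eps t i p.
Proof.
move=> vp hd; case: (Hbr t i p vp) => bri _.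
have vu := valid_upd vp bri.
case: Hpot => _ hP; rewrite hP //.
have h1 := ft_lo i vu; have h2 := ft_hi i vp.
have h3 : (1 + eps) * Ci i (upd p i (br t i p)) <= e1 * Cti i (upd p i (br t i p)).
  by rewrite -e1_eq -mulrA ler_wpM2l // ltW // e1_gt0.
rewrite /delta; lra.
Qed.

Lemma tau_pos i e : 0 < F e (w i e).
Proof.
case: Hg => _ _ hw _ [_ hs hx hex].
have [j0 hj0] := hex e.
rewrite /Fcost (negbTE (lt0n_neq0 (hw i e))) (bigD1 j0) //=.
have h1 : 0 < xi e j0 * ((w i e)%:R `^ alpha j0).
  by apply: mulr_gt0 => //; apply: powR_gt0; rewrite ltr0n.
have h2 : 0 <= \sum_(j < q | j != j0) xi e j * ((w i e)%:R `^ alpha j).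
  by apply: sumr_ge0 => j _; apply: mulr_ge0 => //; apply: powR_ge0.
have h3 := hs e.
lra.
Qed.

Definition p0 := init_profile P w alpha sigma xi O.

Lemma p0_valid : valid P p0.
Proof.
apply/forallP => i; rewrite /p0 /init_profile ffunE.
case: Hg => _ hP _ _ _.
by have [h _] := Hor (P i) (fun e => F e (w i e)) (hP i) (tau_pos i).
Qed.

Definition pstar := [arg min_(p < p0 | valid P p) C p]%O.

Lemma pstar_spec : valid P pstar /\ forall p, valid P p -> C pstar <= C p.
Proof. by rewrite /pstar; case: arg_minP => [|ps h1 h2]; [exact: p0_valid | split]. Qed.

Lemma vps : valid P pstar. Proof. by case: pstar_spec. Qed.
Lemma minps p : valid P p -> C pstar <= C p. Proof. by case: pstar_spec => _; apply. Qed.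

Lemma sum_delta t p : valid P p ->
  (1 - eps) * ((1 - r * mu) * C p - r * lam * C pstar)
    <= \sum_i delta ft br eps t i p.
Proof.
move=> vp; rewrite /delta sumrB -mulr_sumr.
have hA : (1 - eps) * C p <= \sum_i Cti i p.
  by rewrite cost_sum // mulr_sumr; apply: ler_sum => i _; apply: ft_lo.
have hB : \sum_i Cti i (upd p i (br t i p)) <=
          rho * (1 + eps) * \sum_i Ci i (upd p i (pstar i)).
  rewrite mulr_sumr; apply: ler_sum => i _.
  case: (Hbr t i p vp) => _ h.
  have psi : pstar i \in P i by move/forallP: vps.
  apply: le_trans (h _ psi) _; rewrite -mulrA; apply: ler_wpM2l; [by move: Hrho; lra | exact: (ft_hi i (valid_upd vp psi))].
have hS : \sum_i Ci i (upd p i (pstar i)) <= lam * C pstar + mu * C p.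
  by case: Hsm => _ _ _ h; apply: h => //; exact: vps.
have he := e1_gt0.
have hB' := ler_wpM2l (ltW he) hB.
have hr0 : 0 <= e1 * rho * (1 + eps) by have h0 := eps_gt0; have hrho := Hrho; apply: mulr_ge0; [apply: mulr_ge0; lra|lra].
have hS' := ler_wpM2l hr0 hS.
have hE : e1 * (rho * (1 + eps)) = rho * e1 ^+ 2 * (1 - eps).
  by rewrite -e1_eq expr2; ring.
move: hB' hS'; rewrite mulrA -[e1 * rho * (1 + eps)]mulrA hE => hB' hS'.
lra.
Qed.

Arguments sum_delta t {p}.

Definition K := 2 * r * lam / (1 - r * mu).
Definition bad p := K * C pstar < C p.

Lemma rmu_pos : 0 < 1 - r * mu.
Proof. by have := rmu_lt1; lra. Qed.

Lemma bad_gap p : bad p -> 2 * (r * lam * C pstar) < (1 - r * mu) * C p.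
Proof.
rewrite /bad /K => h.
have hp := rmu_pos.
have := ltr_pM2l hp; move=> /(_ (2 * r * lam / (1 - r * mu) * C pstar) (C p)).
rewrite h => /esym heq.
have -> : 2 * (r * lam * C pstar) = (1 - r * mu) * (2 * r * lam / (1 - r * mu) * C pstar).
  by field; lra.
by [].
Qed.
Arguments bad_gap {p}.

Lemma lam_gt0 : 0 < lam. Proof. by case: Hsm. Qed.

Lemma Y_ge0 : 0 <= r * lam * C pstar.
Proof.
apply: mulr_ge0; last exact: C_ge0.
have h := r_ge1; have h2 := lam_gt0; apply: mulr_ge0; lra.
Qed.

Lemma bad_sum_pos t p : valid P p -> bad p -> 0 < \sum_i delta ft br eps t i p.
Proof.
move=> vp hb; have g := bad_gap hb; have sd := sum_delta t vp.
have y0 := Y_ge0.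
apply: lt_le_trans sd; apply: mulr_gt0; first by have := eps_lt1; lra.
lra.
Qed.
Arguments bad_sum_pos t {p}.

Lemma bad_step t i p : valid P p -> bad p ->
  abrd_step ft br eps t i (p, false) =
  (if 0 < delta ft br eps t i p then upd p i (br t i p) else p, false).
Proof.
move=> vp hb; rewrite /abrd_step.
have -> : [forall j, delta ft br eps t j p <= 0] = false.
  apply/negbTE/negP => /forallP H.
  have := bad_sum_pos t vp hb; rewrite ltNge sumr_le0 //.
by case: ifP.
Qed.
Arguments bad_step t i {p}.

Lemma PhiA p : valid P p -> Phi p <= A * C p.
Proof.
move=> vp; case: Hbnd => hA _ h; case/andP: (h p vp) => h1 _.
rewrite -ler_pdivrMl; [by rewrite mulrC | lra].
Qed.
Arguments PhiA {p}.

Lemma key t p : valid P p -> bad p ->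
  \sum_i Phi (abrd_step ft br eps t i (p, false)).1
    <= N%:R * (1 - (Qpar N rho A mu eps)^-1) * Phi p.
Proof.
move=> vp hb.
have hterm i : (1 + eps) * (Phi (abrd_step ft br eps t i (p, false)).1 - Phi p)
                 <= - delta ft br eps t i p.
  rewrite bad_step //=; case: ifP => hd; first exact: step_dec.
  by rewrite subrr mulr0 oppr_ge0 leNgt hd.
have hsum : (1 + eps) * (\sum_i Phi (abrd_step ft br eps t i (p, false)).1 - N%:R * Phi p)
              <= - \sum_i delta ft br eps t i p.
  have : \sum_i (1 + eps) * (Phi (abrd_step ft br eps t i (p, false)).1 - Phi p)
           <= \sum_i - delta ft br eps t i p by apply: ler_sum => i _; exact: hterm.
  rewrite -mulr_sumr sumrB sumr_const card_ord.
  by rewrite sumrN mulr_natl.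
set D := \sum_i _ - _ in hsum.
have sd := sum_delta t vp; have g := bad_gap hb.
have e0 : 0 < 1 - eps by have := eps_lt1; lra.
have g' := ler_wpM2l (ltW e0) (ltW g).
have hE : 1 + eps = e1 * (1 - eps) by rewrite e1_eq.
rewrite hE in hsum.
have hZ : (1 - eps) * (e1 * D + (1 - r * mu) * C p / 2) <= 0.
  have y0 := Y_ge0. lra.
rewrite pmulr_rle0 // in hZ.
have hC := PhiA vp.
have rp := rmu_pos.
have hC' := ler_wpM2l (ltW rp) hC.
have A1 : 1 <= A by case: Hbnd.
have hN : (0 < N)%N by case: Hg.
have hZ' : 2 * e1 * A * D + (1 - r * mu) * Phi p <= 0.
  have := ler_wpM2l (_ : 0 <= 2 * A) hZ; rewrite mulr0 => /(_ ltac:(lra)) h.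
  lra.
have he := e1_gt0.
have -> : N%:R * (1 - (Qpar N rho A mu eps)^-1) * Phi p =
          N%:R * Phi p - (1 - r * mu) / (2 * e1 * A) * Phi p.
  rewrite /Qpar; field.
  apply/and4P; split; [apply/eqP; lra|apply/eqP; lra|apply/eqP; lra|].
  by rewrite pnatr_eq0 -lt0n.
have p2 : 0 < 2 * e1 * A by apply: mulr_gt0; [lra|lra].
suff : D + (1 - r * mu) / (2 * e1 * A) * Phi p <= 0 by rewrite /D; lra.
rewrite -(pmulr_rle0 _ p2) mulrDr.
have -> : 2 * e1 * A * ((1 - r * mu) / (2 * e1 * A) * Phi p) = (1 - r * mu) * Phi p.
  by field; repeat (apply/andP; split); apply/eqP; lra.
exact: hZ'.
Qed.

Definition lst {n} (c : {ffun 'I_n -> 'I_N}) : seq 'I_N := [seq c k | k <- enum 'I_n].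

Lemma split_sum n (G : seq 'I_N -> R) :
  \sum_(c : {ffun 'I_n.+1 -> 'I_N}) G (lst c) =
  \sum_(i : 'I_N) \sum_(c : {ffun 'I_n -> 'I_N}) G (i :: lst c).
Proof.
rewrite pair_big /=.
pose h := fun (x : 'I_N * {ffun 'I_n -> 'I_N}) =>
  ([ffun k : 'I_n.+1 => if unlift ord0 k is Some k' then x.2 k' else x.1]
     : {ffun 'I_n.+1 -> 'I_N}).
pose g := fun (d : {ffun 'I_n.+1 -> 'I_N}) =>
  (d ord0, ([ffun k : 'I_n => d (lift ord0 k)] : {ffun 'I_n -> 'I_N})).
rewrite (reindex h); last first.
  exists g => x _.
    case: x => i c; rewrite /g /h /= !ffunE unlift_none; congr pair.
    by apply/ffunP => k; rewrite !ffunE liftK.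
  apply/ffunP => k; rewrite /h /g ffunE.
  by case: unliftP => [k'|] -> /=; rewrite ?ffunE.
apply: eq_bigr => [[i c]] _; congr G.
rewrite /lst enum_ordSl /= ffunE unlift_none /=; congr cons.
rewrite -map_comp; apply: eq_map => k /=.
by rewrite ffunE liftK.
Qed.

Definition Wt n t (st : profile E N * bool) : R :=
  \sum_(c : {ffun 'I_n -> 'I_N})
     (if all bad (abrd_run ft br eps t st (lst c))
      then Phi (last st.1 (abrd_run ft br eps t st (lst c))) else 0).

Lemma Wt_S n t st : Wt n.+1 t st =
  \sum_i (if bad (abrd_step ft br eps t i st).1
          then Wt n t.+1 (abrd_step ft br eps t i st) else 0).
Proof.
rewrite /Wt (split_sum _ (fun l => if all bad (abrd_run ft br eps t st l)
   then Phi (last st.1 (abrd_run ft br eps t st l)) else 0)); apply: eq_bigr => i _ /=.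
case: ifP => hb /=; last by rewrite big1 // => c _.
by [].
Qed.

Lemma lst0 (c : {ffun 'I_0 -> 'I_N}) : lst c = [::].
Proof. by apply: size0nil; rewrite size_map size_enum_ord. Qed.

Lemma Wt0 t st : Wt 0 t st = Phi st.1.
Proof.
rewrite /Wt; under eq_bigr do rewrite lst0 /=.
by rewrite sumr_const card_ffun !card_ord expn0.
Qed.

Lemma Q_ge1 : 1 <= Qpar N rho A mu eps.
Proof.
have A1 : 1 <= A by case: Hbnd.
have hN : (0 < N)%N by case: Hg.
have hN1 : 1 <= (N%:R : R) by rewrite ler1n.
have rp := rmu_pos.
have r1 : 0 <= r * mu.
  have := r_ge1; case: Hsm => _ hm _ _ => h; apply: mulr_ge0; lra.
rewrite /Qpar ler_pdivlMr // mul1r.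
have h1 : 1 <= eps1 eps * N%:R * A by apply: mulr_ege1 => //; apply: mulr_ege1 => //; exact: e1_ge1.
have : 2 * eps1 eps * N%:R * A = 2 * (eps1 eps * N%:R * A) by ring.
lra.
Qed.

Lemma c_ge0 : 0 <= 1 - (Qpar N rho A mu eps)^-1.
Proof.
have h := Q_ge1.
have : (Qpar N rho A mu eps)^-1 <= 1 by rewrite invf_le1 //; lra.
lra.
Qed.

Lemma Phi_gt0 p : valid P p -> 0 < Phi p.
Proof. by case: Hpot => h _; apply: h. Qed.

Lemma step_valid t i b p : valid P p -> valid P (abrd_step ft br eps t i (p, b)).1.
Proof.
move=> vp; rewrite /abrd_step; case: b => //=; case: ifP => //= _; case: ifP => //= _.
by apply: valid_upd => //; case: (Hbr t i p vp).
Qed.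
Arguments step_valid t i b {p}.

Lemma run_valid l t p b : valid P p -> all (valid P) (abrd_run ft br eps t (p, b) l).
Proof.
elim: l t p b => [|i l IH] t p b vp; first by [].
have -> : abrd_run ft br eps t (p, b) (i :: l) =
  (abrd_step ft br eps t i (p, b)).1 :: abrd_run ft br eps t.+1 (abrd_step ft br eps t i (p, b)) l by [].
have := step_valid t i b vp.
case: (abrd_step ft br eps t i (p, b)) => p' b' /= vp'.
by apply/andP; split => //; apply: IH.
Qed.

Lemma Wt_bound n : forall t p, valid P p -> bad p ->
  Wt n t (p, false) <= (N%:R * (1 - (Qpar N rho A mu eps)^-1)) ^+ n * Phi p.
Proof.
elim: n => [|n IH] t p vp hb; first by rewrite Wt0 expr0 mul1r.
have c0 := c_ge0.
have Nc0 : 0 <= N%:R * (1 - (Qpar N rho A mu eps)^-1) by apply: mulr_ge0.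
rewrite Wt_S.
apply: (@le_trans _ _ (\sum_i (N%:R * (1 - (Qpar N rho A mu eps)^-1)) ^+ n *
                  Phi (abrd_step ft br eps t i (p, false)).1)).
  apply: ler_sum => i _.
  have vp' := step_valid t i false vp.
  move: vp'; rewrite (bad_step t i vp hb) /= => vp'.
  case: ifP => hb'; first exact: IH.
  by apply: mulr_ge0; [apply: exprn_ge0 | apply: ltW; apply: Phi_gt0].
rewrite -mulr_sumr exprSr -mulrA; apply: ler_wpM2l; first exact: exprn_ge0.
exact: key.
Qed.

Local Notation M := (N%:R `^ alpha_max alpha).

Lemma alpha_gt1 j : 1 < alpha j. Proof. by case: Hg => _ _ _ _ [h _ _ _]. Qed.

Lemma amax_ge j : alpha j <= alpha_max alpha.
Proof. exact: le_bigmax. Qed.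

Lemma amax_ge1 : 1 <= alpha_max alpha.
Proof.
case: Hg => _ _ _ hq _.
have := amax_ge (Ordinal hq); have := alpha_gt1 (Ordinal hq); lra.
Qed.

Lemma N_ge1 : 1 <= (N%:R : R).
Proof. by case: Hg => hN _ _ _ _; rewrite ler1n. Qed.

Lemma M_ge1 : 1 <= M.
Proof.
have h := amax_ge1; have hN := N_ge1.
have := ler_powR hN (_ : 0 <= alpha_max alpha); rewrite powRr0; apply; lra.
Qed.

Lemma M_geN : N%:R <= M.
Proof.
have h := amax_ge1; have hN := N_ge1.
have := ler_powR hN h; rewrite powRr1 //; lra.
Qed.

Lemma powN_le j : N%:R `^ alpha j <= M.
Proof. exact: (ler_powR N_ge1 (amax_ge j)). Qed.

Lemma F_mono e a b : (0 < a)%N -> (a <= b)%N -> F e a <= F e b.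
Proof.
move=> a0 ab; have b0 : (0 < b)%N by apply: leq_trans ab.
rewrite /Fcost (negbTE (lt0n_neq0 a0)) (negbTE (lt0n_neq0 b0)) lerD2l.
apply: ler_sum => j _; apply: ler_wpM2l; first by case: Hg => _ _ _ _ [].
have := alpha_gt1 j => h.
apply: ge0_ler_powR; rewrite ?nnegrE ?ler0n ?ler_nat //; lra.
Qed.

Lemma F_scale e m : (0 < m)%N -> F e (N * m) <= M * F e m.
Proof.
move=> m0; have Nm0 : (0 < N * m)%N by rewrite muln_gt0 m0 andbT; case: Hg.
case: Hg => _ _ _ _ [_ hs hx _].
rewrite /Fcost (negbTE (lt0n_neq0 m0)) (negbTE (lt0n_neq0 Nm0)) mulrDr mulr_sumr.
apply: lerD.
  by rewrite -[X in X <= _]mul1r; apply: ler_wpM2r => //; exact: M_ge1.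
apply: ler_sum => j _; rewrite natrM powRM // mulrCA.
apply: ler_wpM2r; last exact: powN_le.
by apply: mulr_ge0 => //; exact: powR_ge0.
Qed.

Lemma M_ge0 : 0 <= M. Proof. exact: powR_ge0. Qed.

Lemma load_bound p e : F e (load w p e) <= M * \sum_(i | e \in p i) F e (w i e).
Proof.
have hM := M_ge0.
case: (posnP (load w p e)) => [->|lp].
  rewrite /Fcost eqxx; apply: mulr_ge0 => //; apply: sumr_ge0 => i _; exact: F_ge0.
case: (pickP (fun i => e \in p i)) => [i1 hi1|hnone]; last first.
  by move: lp; rewrite /load big_pred0.
case: (@arg_maxnP _ i1 (fun i => e \in p i) (fun i => w i e) hi1) => i0 hi0 hmax.
have hl : (load w p e <= N * w i0 e)%N.
  rewrite /load; apply: (@leq_trans (\sum_(i < N) w i0 e)).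
    rewrite [X in (_ <= X)%N](bigID (fun i => e \in p i)) /=.
    apply: leq_trans (leq_addr _ _); apply: leq_sum => i hi; exact: hmax.
  by rewrite sum_nat_const card_ord.
case: Hg => _ _ hw _ _.
apply: le_trans (F_mono e _ _ lp hl) _.
apply: le_trans (F_scale e _ (hw i0 e)) _.
apply: ler_wpM2l => //.
rewrite (bigD1 i0) //= lerDl; apply: sumr_ge0 => i _; exact: F_ge0.
Qed.

Lemma exch p (G : 'I_N -> E -> R) :
  \sum_e \sum_(i | e \in p i) G i e = \sum_i \sum_(e in p i) G i e.
Proof.
under eq_bigr do rewrite big_mkcond.
rewrite exchange_big /=; apply: eq_bigr => i _.
by rewrite [RHS]big_mkcond.
Qed.

Lemma p0_cost : C p0 <= rho * M * N%:R * C pstar.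
Proof.
have hM := M_ge0.
have h1 : C p0 <= M * \sum_i \sum_(e in p0 i) F e (w i e).
  rewrite /total_cost -exch mulr_sumr; apply: ler_sum => e _; exact: load_bound.
have h2 : \sum_i \sum_(e in p0 i) F e (w i e) <=
          rho * \sum_i \sum_(e in pstar i) F e (w i e).
  rewrite mulr_sumr; apply: ler_sum => i _.
  case: Hg => _ hP _ _ _.
  have [_ h] := Hor (P i) (fun e => F e (w i e)) (hP i) (tau_pos i).
  have psi : pstar i \in P i by move/forallP: vps.
  by rewrite /p0 /init_profile ffunE; apply: h.
have h3 : \sum_i \sum_(e in pstar i) F e (w i e) <= N%:R * C pstar.
  rewrite -exch /total_cost mulr_sumr; apply: ler_sum => e _.
  apply: (@le_trans _ _ (\sum_(i < N) F e (load w pstar e))); last first.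
    by rewrite sumr_const card_ord mulr_natl.
  rewrite [X in _ <= X](bigID (fun i => e \in pstar i)) /=.
  apply: le_trans (_ : _ <= \sum_(i < N | e \in pstar i) F e (load w pstar e)) _.
    apply: ler_sum => i hi; apply: F_mono; first by case: Hg.
    by rewrite /load (bigD1 i) //= leq_addr.
  by rewrite lerDl; apply: sumr_ge0 => i _; exact: F_ge0.
have hr : 0 <= rho by have := Hrho; lra.
have h2' := ler_wpM2l hM h2.
have h3' := ler_wpM2l (mulr_ge0 hM hr) h3.
have : M * (rho * \sum_i \sum_(e in pstar i) F e (w i e)) =
       M * rho * \sum_i \sum_(e in pstar i) F e (w i e) by ring.
have : rho * M * N%:R * C pstar = M * rho * (N%:R * C pstar) by ring.
lra.
Qed.

Local Notation Q := (Qpar N rho A mu eps).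
Local Notation L := (A * B * M).

Lemma L_ge1 : 1 <= L.
Proof.
have [A1 B1 _] := Hbnd; have := M_ge1 => h.
by apply: mulr_ege1 => //; apply: mulr_ege1.
Qed.

Lemma L_geN : N%:R <= L.
Proof.
have [A1 B1 _] := Hbnd; have h := M_geN; have hN := N_ge1.
have hAB : 1 <= A * B by apply: mulr_ege1.
have := ler_wpM2r (_ : 0 <= M) hAB; rewrite mul1r => /(_ M_ge0) h2.
lra.
Qed.

Lemma T_ge : Q * ln L <= (Tpar N alpha rho A B mu eps)%:R.
Proof.
have hQ := Q_ge1; have hl := ln_ge0 L_ge1.
have h0 : 0 <= Q * ln L by apply: mulr_ge0 => //; lra.
rewrite /Tpar natr_absz ger0_norm; first exact: ceil_ge.
by rewrite ceil_ge0; lra.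
Qed.

Lemma Tp_ge : (N * Tpar N alpha rho A B mu eps <= Tprime N alpha rho A B mu eps)%N.
Proof.
rewrite /Tprime; apply: leq_mul => //.
case: (Tpar _ _ _ _ _ _ _) => [|k] //.
by rewrite expnS leq_pmulr // expn_gt0.
Qed.

Lemma cpow_bound n : (N * Tpar N alpha rho A B mu eps <= n)%N ->
  (1 - Q^-1) ^+ n <= (L^-1) ^+ N.
Proof.
move=> hTp.
have hQ := Q_ge1; have Q0 : 0 < Q by lra.
have c0 := c_ge0.
have h1 : 1 - Q^-1 <= expR (- Q^-1) by have := expR_ge1Dx (- Q^-1); lra.
have h2 : (1 - Q^-1) ^+ n <= expR (- Q^-1) ^+ n.
  by apply: lerXn2r; rewrite ?nnegrE ?expR_ge0.
apply: le_trans h2 _.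
rewrite -expRM_natl.
have L0 : 0 < L by have := L_ge1; lra.
have -> : L^-1 ^+ N = expR (N%:R * - ln L).
  by rewrite expRM_natl expRN lnK // posrE.
rewrite ler_expR.
have hT := T_ge.
have hTQ : ln L <= Q^-1 * (Tpar N alpha rho A B mu eps)%:R.
  by rewrite ler_pdivlMl.
have hn : (N * Tpar N alpha rho A B mu eps)%:R <= (n%:R : R) by rewrite ler_nat.
rewrite natrM in hn.
have hN := N_ge1.
have hQi : 0 <= Q^-1 by rewrite invr_ge0; lra.
have h3 := ler_wpM2l (_ : 0 <= N%:R) hTQ.
have h4 := ler_wpM2l hQi hn.
have : N%:R * (Q^-1 * (Tpar N alpha rho A B mu eps)%:R) =
       Q^-1 * (N%:R * (Tpar N alpha rho A B mu eps)%:R) by ring.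
move: (h3 (ltW (lt_le_trans ltr01 hN))) => h3'.
have : n%:R * - Q^-1 = - (Q^-1 * n%:R) by ring.
have : (N%:R : R) * - ln L = - (N%:R * ln L) by ring.
lra.
Qed.

Lemma final_arith n : (N * Tpar N alpha rho A B mu eps <= n)%N ->
  (1 - Q^-1) ^+ n * L * N%:R <= 1.
Proof.
move=> hTp.
have L0 : 0 < L by have := L_ge1; lra.
have h := cpow_bound _ hTp.
apply: le_trans (_ : L^-1 ^+ N * L * N%:R <= _).
  apply: ler_wpM2r; first exact: ler0n.
  apply: ler_wpM2r; [lra | exact: h].
move: L0 (L_geN); clear h.
case: Hg => hN _ _ _ _.
move: (A * B * M) => LL L0 hLN.
case: N hN hLN => [|N'] hN hLN; first by [].
have hN' : (N'.+1%:R : R) <= LL ^+ N'.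
  apply: (@le_trans _ _ (N'.+1%:R ^+ N')).
    rewrite -natrX ler_nat; case: N' {hN hLN} => [|k]; first by [].
    by rewrite -{1}(expn1 k.+2) leq_pexp2l.
  by apply: lerXn2r; rewrite ?nnegrE ?ler0n; [| lra |].
apply: le_trans (_ : LL^-1 ^+ N'.+1 * LL * LL ^+ N' <= _).
  apply: ler_wpM2l; last exact: hN'.
  apply: mulr_ge0; last by lra.
  by apply: exprn_ge0; rewrite invr_ge0; lra.
rewrite exprVn -mulrA -exprS mulVf; first exact: lexx.
rewrite expf_eq0; apply/negP => /andP [_ /eqP h0]; lra.
Qed.

Lemma bigmin_le (s : seq (profile E N)) x0 x : x \in s ->
  \big[Num.min/C x0]_(y <- s) C y <= C x.
Proof.
elim: s => [//|y s IH]; rewrite inE big_cons => /orP[/eqP ->|hx].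
  by rewrite ge_min lexx.
by rewrite ge_min IH ?orbT.
Qed.

Lemma K_gt0 : 0 < K.
Proof.
rewrite /K; apply: divr_gt0; last exact: rmu_pos.
have := r_ge1; have := lam_gt0 => h1 h2.
by apply: mulr_gt0 => //; apply: mulr_gt0 => //; lra.
Qed.

Lemma K_ge : 0 < C pstar -> 2 * rho <= K.
Proof.
move=> Cs0.
have hlm : 1 <= lam + mu.
  case: Hsm => _ _ _ h; have := h _ _ vps vps.
  under eq_bigr do rewrite upd_id.
  rewrite -cost_sum; last exact: vps.
  move=> h'; rewrite -(ler_pM2r Cs0) mul1r mulrDl; lra.
rewrite /K ler_pdivlMr; last exact: rmu_pos.
have hr1 := r_ge1; have hrho := Hrho.
have hmu : 0 < mu by case: Hsm.
have he : 1 <= e1 ^+ 2 by rewrite expr_ge1 //; have := e1_ge1; lra.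
have h1 : rho <= r by rewrite -{1}[rho]mulr1; apply: ler_wpM2l => //; lra.
have h2 : 0 <= r * mu * (rho - 1) by apply: mulr_ge0; [apply: mulr_ge0; lra | lra].
have h3 : r * (1 - mu) <= r * lam by apply: ler_wpM2l; lra.
lra.
Qed.

Definition wt n (c : {ffun 'I_n -> 'I_N}) : R :=
  if all bad (abrd_run ft br eps 1 (p0, false) (lst c))
  then Phi (last p0 (abrd_run ft br eps 1 (p0, false) (lst c))) else 0.
Arguments wt {n}.

Lemma wt_ge0 n (c : {ffun 'I_n -> 'I_N}) : 0 <= wt c.
Proof.
rewrite /wt; case: ifP => // _; apply: ltW; apply: Phi_gt0.
have := run_valid (lst c) 1 p0 false p0_valid => hv.
have : all (valid P) (p0 :: abrd_run ft br eps 1 (p0, false) (lst c)) by rewrite /= p0_valid hv.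
by move/allP; apply; exact: mem_last.
Qed.

Lemma final :
  1 / 2 <= success_prob P w alpha sigma xi ft br eps p0
             (Tprime N alpha rho A B mu eps) K.
Proof.
set n := Tprime _ _ _ _ _ _ _.
have hTn : (N * Tpar N alpha rho A B mu eps <= n)%N by exact: Tp_ge.
clearbody n.
rewrite /success_prob; set S := [set c : {ffun 'I_n -> 'I_N} | _ ].
have hcard : (#|S| + #|~: S| = N ^ n)%N by rewrite cardsC card_ffun !card_ord.
have hNn : (0 < N ^ n)%N by rewrite expn_gt0; case: Hg => -> _.
have hK := K_gt0.
have hnotin c : c \notin S -> all bad (generated ft br eps p0 (lst c)).
  apply: contraR => /allPn [x xin hx].
  rewrite inE; apply/forallP => popt; apply/implyP => vpo.
  rewrite /output_cost; apply: le_trans (bigmin_le _ _ _ xin) _.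
  rewrite /bad -leNgt in hx; apply: le_trans hx _.
  by apply: ler_wpM2l; [exact: ltW | exact: minps].
suff hf : (2 * #|~: S| <= N ^ n)%N.
  have h2 : (N ^ n <= 2 * #|S|)%N by lia.
  rewrite ler_pdivlMr ?ltr0n //.
  have := h2; rewrite -(ler_nat R) natrM => h3.
  lra.
case: (boolP (bad p0)) => hb0; last first.
  have hall c : c \in S.
    by apply/negPn/negP => /hnotin; rewrite /= (negbTE hb0).
  suff -> : #|~: S| = 0%N by [].
  apply/eqP; rewrite cards_eq0; apply/eqP/setP => c; rewrite finset.in_setC hall finset.in_set0.
  by [].
have Cs0 : 0 < C pstar.
  have h := p0_cost; move: hb0; rewrite /bad => hb.
  have hk := C_ge0 pstar.
  rewrite lt0r; apply/andP; split => //.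
  apply/eqP => h0; move: h hb; rewrite h0 !mulr0; lra.
have hW : (#|~: S|%:R : R) * (K * C pstar) <= B * Wt n 1 (p0, false).
  have hC : Wt n 1 (p0, false) = \sum_(c : {ffun 'I_n -> 'I_N}) wt c by reflexivity.
  rewrite hC mulr_natl -sumr_const [X in _ <= X]mulr_sumr.
  apply: (@le_trans _ _ (\sum_(c in ~: S) B * wt c)).
    apply: ler_sum => c; rewrite inE => /hnotin /= /andP [_ hall].
    rewrite /wt hall.
    set l := last _ _.
    have : all bad (p0 :: abrd_run ft br eps 1 (p0, false) (lst c)) by rewrite /= hb0.
    move/allP => /(_ l (mem_last _ _)) hbl.
    have hvl : valid P l.
      have := run_valid (lst c) 1 p0 false p0_valid => hv.
      have : all (valid P) (p0 :: abrd_run ft br eps 1 (p0, false) (lst c)) by rewrite /= p0_valid hv.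
      by move/allP; apply; exact: mem_last.
    have [_ _ hB] := Hbnd; case/andP: (hB l hvl) => _ hB2.
    rewrite /bad in hbl; apply: (le_trans (ltW hbl)); exact: hB2.
  rewrite [X in X <= _]big_mkcond /=; apply: ler_sum => c _.
  case: ifP => _; first exact: lexx.
  apply: mulr_ge0; last exact: wt_ge0.
  by have [_ B1 _] := Hbnd; lra.
have hWb := Wt_bound n 1 p0 p0_valid hb0.
have hPhi := PhiA p0_valid.
have hpc := p0_cost.
have [A1 B1 _] := Hbnd.
have hfa := final_arith _ hTn.
have hKg := K_ge Cs0.
set c := 1 - _ in hWb hfa.
have c0 : 0 <= c by exact: c_ge0.
set X := (#|~: S|%:R : R) in hW.
set Nn := (N%:R : R) ^+ n.
have Nn0 : 0 <= Nn by apply: exprn_ge0.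
have cn0 : 0 <= c ^+ n by apply: exprn_ge0.
have hrho := Hrho.
have e1' : Wt n 1 (p0, false) <= Nn * c ^+ n * (A * (rho * M * N%:R * C pstar)).
  apply: le_trans hWb _; rewrite exprMn; apply: ler_wpM2l; first exact: mulr_ge0.
  apply: le_trans hPhi _; apply: ler_wpM2l => //; lra.
have e2 : X * (K * C pstar) <= B * (Nn * c ^+ n * (A * (rho * M * N%:R * C pstar))).
  apply: le_trans hW _; apply: ler_wpM2l => //; lra.
have e3 : B * (Nn * c ^+ n * (A * (rho * M * N%:R * C pstar))) =
          (Nn * rho * C pstar) * (c ^+ n * (A * B * M) * N%:R) by ring.
have hrc : 0 <= Nn * rho * C pstar by apply: mulr_ge0; [apply: mulr_ge0; lra|lra].
have e4 := ler_wpM2l hrc hfa.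
have X0 : 0 <= X by rewrite /X ler0n.
have e5 := ler_wpM2l X0 (ler_wpM2r (ltW Cs0) hKg).
have hfin : X * 2 * (rho * C pstar) <= Nn * (rho * C pstar).
  have : X * (2 * rho * C pstar) = X * 2 * (rho * C pstar) by ring.
  have : X * (K * C pstar) = X * (K * C pstar) by [].
  have : Nn * rho * C pstar * 1 = Nn * (rho * C pstar) by ring.
  lra.
have rc0 : 0 < rho * C pstar by apply: mulr_gt0 => //; lra.
rewrite ler_pM2r // in hfin.
rewrite -(ler_nat R) natrM natrX.
by rewrite mulrC.
Qed.

End Main.

Theorem theorem9p2 (R : realType) (E : finType) (N : nat)
  (P : 'I_N -> {set {set E}}) (w : 'I_N -> E -> nat) (q : nat)
  (alpha : 'I_q -> R) (sigma : E -> R) (xi : E -> 'I_q -> R)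
  (rho : R) (O : {set {set E}} -> (E -> R) -> {set E})
  (f : 'I_N -> E -> profile E N -> R) (Phi : profile E N -> R)
  (A B lam mu eps : R)
  (ft : 'I_N -> E -> profile E N -> R)
  (br : nat -> 'I_N -> profile E N -> {set E}) :
  gnd_instance P w alpha sigma xi ->
  1 <= rho -> is_oracle rho O ->
  is_csm P w alpha sigma xi f ->
  is_potential P f Phi -> potential_bounded P w alpha sigma xi Phi A B ->
  is_smooth P w alpha sigma xi f lam mu ->
  0 < eps < 1 ->
  mu < 1 / (rho * eps1 eps ^+ 2) ->
  approx_shares P f ft eps ->
  approx_br P ft rho br ->
  1 / 2 <= success_prob P w alpha sigma xi ft br eps
             (init_profile P w alpha sigma xi O)
             (Tprime N alpha rho A B mu eps)
             (2 * rho * eps1 eps ^+ 2 * lam / (1 - rho * eps1 eps ^+ 2 * mu)).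
Proof.
move=> Hg Hrho Hor Hcsm Hpot Hbnd Hsm Heps Hmu Hapx Hbr.
rewrite -[2 * rho * eps1 eps ^+ 2]mulrA.
have h := final R E N P w q alpha sigma xi rho O f Phi A B lam mu eps ft br Hg Hrho Hor Hcsm Hpot Hbnd Hsm Heps Hmu Hapx Hbr.
move: h; rewrite /K /p0 => h.
exact h.
Qed.
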